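(* Let $z\in\mathbb{N}$, $z\ge1$, and let $\alpha\in\{0,1,2\}^*$ be the standard base-3 representation of $z$ (no leading zeros). Let $x_0<0$. In the limit configuration $c_\infty[\alpha]$, column $x_0$ contains a southmost cell $(x_0,y_b)$ whose sum bit is defined; its sum bit is $0$, all cells $(x_0,y)$ with $y_b<y\le|\alpha|$ are defined, and the base-$3'$ word $\gamma$ they give satisfies $[\![\gamma]\!]_{3'}=T^{|x_0|}(z)$.
   Context: The Collatz map $T:\mathbb{N}\to\mathbb{N}$ is $T(x)=x/2$ for even $x$ and $T(x)=(3x+1)/2$ for odd $x$. Notation: $E=(1,0)$, $W=(-1,0)$, $N=(0,1)$, $S=(0,-1)$ in $\mathbb{Z}^2$; $[P]\in\{0,1\}$ equals $1$ iff $P$ holds. Strings are indexed from the right: $\alpha=\alpha_{k-1}\cdots\alpha_0$; $[\![\alpha]\!]_3=\sum_i\alpha_i3^i$. Base $3'$: words over $\{0,\bar0,1,\bar1\}$ with trit values $0\mapsto0$, $\bar0\mapsto1$, $1\mapsto1$, $\bar1\mapsto2$, and $[\![\gamma]\!]_{3'}=\sum_i\mathrm{val}(\gamma_i)3^i$. The symbols $0,\bar0,1,\bar1$ are identified with the cell states $(0,0),(0,1),(1,0),(1,1)$. The encoding $\mathrm{enc}:\{0,1,2\}^*\to\{0,\bar0,1,\bar1\}^*$ acts symbol by symbol: $0\mapsto0$, $2\mapsto\bar1$, and a digit $\alpha_i=1$ maps to $1$ if there exists $j<i$ with $\alpha_j\ne1$ and the largest such $j$ has $\alpha_j=2$, and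 to $\bar0$ otherwise. A vertical contiguous segment of defined cells gives the base-$3'$ word formed by the cells' states read from north (most significant) to south (least significant). The CQCA. State set $\Sigma=\{0,1,\bot\}^2\setminus\{(\bot,0),(\bot,1)\}$; a state $(s,c)$ has sum bit $s$ and carry bit $c$; it is undefined if $(\bot,\bot)$, half-defined if $s\in\{0,1\},c=\bot$, defined if $s,c\in\{0,1\}$. One step $F(C)$ of a configuration $C:\mathbb{Z}^2\to\Sigma$: first the non-local rule gives $C'$: $C'(u)=(0,1)$ if $C(u+W)=(1,\bot)$, $C(u)\in\{(0,\bot),(\bot,\bot)\}$ and $C(u+iE)\in\{(0,\bot),(\bot,\bot)\}$ for all $i\ge1$; otherwise $C'(u)=C(u)$. Then the local rule on $C'$ at all cells simultaneously: (i) if $C'(u)=(s,\bot)$ half-defined and $C'(u+E)=(s',c')$ defined, $F(C)(u)=(s,[s+s'+c'\ge2])$; (ii) if $C'(u)=(\bot,\bot)$, $C'(u+N)=(s,\bot)$ half-defined and $C'(u+N+E)=(s',c')$ defined, $F(C)(u)=((s+s'+c')\bmod2,\bot)$; (iii) otherwise $F(C)(u)=C'(u)$. For $\alpha\in\{0,1,2\}^*$ with $\gamma=\mathrm{enc}(\alpha)$, the initial configuration $c_0[\alpha]$ is: $c_0[\alpha](0,i)=\gamma_{i-1}$ for $1\le i\le|\alpha|$, $c_0[\alpha](x,|\alpha|)=(0,\bot)$ for all $x<0$, and $(\bot,\bot)$ elsewhere. Each cell's state in $F^i(c_0[\alpha])$ is eventually constant; $c_\infty[\alpha]$ is the pointwise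 limit. *)

(* Defs.v *)
From Stdlib Require Import ZArith Arith List Bool ClassicalEpsilon.
Import ListNotations.
Open Scope Z_scope.

Definition T (x : nat) : nat :=
  if Nat.even x then (x / 2)%nat else ((3 * x + 1) / 2)%nat.

(** Base-3 words are lists of digits, least significant first:
    alpha = alpha_{k-1} ... alpha_0 is the list [alpha_0; ...; alpha_{k-1}]. *)
Fixpoint val3 (a : list nat) : nat :=
  match a with [] => 0%nat | d :: a' => (d + 3 * val3 a')%nat end.

Definition std_base3 (a : list nat) (z : nat) : Prop :=
  (forall d, In d a -> (d < 3)%nat) /\ last a 0%nat <> 0%nat /\ val3 a = z.

(** Cell states Sigma = {0,1,bot}^2 \ {(bot,0),(bot,1)}. *)
Inductive cell : Type :=
| Undef                      (* (bot,bot) *)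
| Half (s : bool)            (* (s,bot) *)
| Def (s c : bool).          (* (s,c) *)

Definition b2n (b : bool) : nat := if b then 1%nat else 0%nat.

(** Trit value of a defined cell: 0 -> 0, 0bar -> 1, 1 -> 1, 1bar -> 2. *)
Definition cval (k : cell) : nat :=
  match k with Def s c => (b2n s + b2n c)%nat | _ => 0%nat end.

Definition config := Z -> Z -> cell.

Definition quiet (k : cell) : Prop := k = Half false \/ k = Undef.

Definition nonlocal_cond (C : config) (x y : Z) : Prop :=
  C (x - 1) y = Half true /\ quiet (C x y) /\
  (forall i : Z, 1 <= i -> quiet (C (x + i) y)).

Definition nonlocal (C : config) : config := fun x y =>
  if excluded_middle_informative (nonlocal_cond C x y)
  then Def false true else C x y.

Definition local (C : config) : config := fun x y =>
  match C x y with
  | Half s =>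
      match C (x + 1) y with
      | Def s' c' => Def s (Nat.leb 2 (b2n s + b2n s' + b2n c'))
      | _ => Half s
      end
  | Undef =>
      match C x (y + 1), C (x + 1) (y + 1) with
      | Half s, Def s' c' => Half (xorb (xorb s s') c')
      | _, _ => Undef
      end
  | k => k
  end.

Definition F (C : config) : config := local (nonlocal C).

(** Encoding enc. prev_non1 a i = Some d iff the largest j < i with a_j <> 1
    exists and has a_j = d. *)
Fixpoint prev_non1 (a : list nat) (i : nat) : option nat :=
  match i with
  | O => None
  | S j => if Nat.eqb (nth j a 0%nat) 1 then prev_non1 a j else Some (nth j a 0%nat)
  end.

Definition enc_digit (a : list nat) (i : nat) : cell :=
  match nth i a 0%nat with
  | O => Def false false
  | 1%nat => if (match prev_non1 a i with Some 2%nat => true | _ => false end)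
             then Def true false else Def false true
  | _ => Def true true
  end.

Definition c0 (a : list nat) : config := fun x y =>
  let k := Z.of_nat (length a) in
  if (x =? 0) && (1 <=? y) && (y <=? k) then enc_digit a (Z.to_nat (y - 1))
  else if (x <? 0) && (y =? k) then Half false
  else Undef.

(** Pointwise limit c_infty[alpha]: the eventual value of each cell
    (chosen classically; Undef if a cell does not stabilise, which by the
    paper never happens). *)
Definition eventually_value (a : list nat) (x y : Z) (v : cell) : Prop :=
  exists N : nat, forall n : nat, (N <= n)%nat -> Nat.iter n F (c0 a) x y = v.

Definition c_inf (a : list nat) : config := fun x y =>
  match excluded_middle_informative (exists v, eventually_value a x y v) with
  | left H => proj1_sig (constructive_indefinite_description _ H)
  | right _ => Undef
  end.

Definition sum_defined (k : cell) : Prop :=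
  match k with Undef => False | _ => True end.

Definition sum_bit_is (k : cell) (b : bool) : Prop :=
  match k with Half s | Def s _ => s = b | Undef => False end.

Definition is_defined (k : cell) : Prop :=
  match k with Def _ _ => True | _ => False end.

(** Base-3' value of the vertical word of the n cells (x, y+1), ..., (x, y+n),
    read north (most significant) to south (least significant). *)
Fixpoint colval (C : config) (x y : Z) (n : nat) : nat :=
  match n with
  | O => 0%nat
  | S m => Nat.add (cval (C x (y + 1))) (Nat.mul 3 (colval C x (y + 1) m))
  end.

(* Main.v *)
Require Import Defs.
From Stdlib Require Import ZArith Arith List Lia Bool FunctionalExtensionality ClassicalEpsilon.
Import ListNotations.
Open Scope Z_scope.


Ltac dm a b := pose proof (Nat.div_mod_eq a b); pose proof (Nat.mod_upper_bound a b ltac:(lia)).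

Definition digit (N p : nat) : nat := ((N / 3 ^ p) mod 3)%nat.
Definition sbit (N q : nat) : bool := Nat.odd (N / 3 ^ q).
Definition cellD (N q : nat) : cell :=
  Def (sbit N q) (Nat.leb 2 (b2n (sbit N q) + digit N (q - 1))).

Lemma b2n_odd_xor : forall s c, xorb s c = Nat.odd (b2n s + b2n c).
Proof. destruct s, c; reflexivity. Qed.

Lemma odd_3q_d : forall Q d : nat, Nat.odd (3 * Q + d) = xorb (Nat.odd Q) (Nat.odd d).
Proof.
  intros. rewrite Nat.odd_add. f_equal. rewrite Nat.odd_mul. simpl. reflexivity.
Qed.

Lemma div3pow_S : forall N q, (N / 3 ^ S q = (N / 3 ^ q) / 3)%nat.
Proof. intros. rewrite Nat.pow_succ_r', Nat.mul_comm, Nat.Div0.div_div; lia. Qed.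

Lemma div3pow_S' : forall N q, (N / 3 ^ S q = (N / 3) / 3 ^ q)%nat.
Proof. intros. rewrite Nat.pow_succ_r', Nat.Div0.div_div. reflexivity. Qed.

Lemma sbit_step : forall N q, sbit N q = xorb (sbit N (S q)) (Nat.odd (digit N q)).
Proof.
  intros. unfold sbit, digit. rewrite div3pow_S. set (P := (N / 3 ^ q)%nat).
  rewrite <- odd_3q_d. f_equal. dm P 3%nat. lia.
Qed.

Lemma cellD_cval : forall N q, (1 <= q)%nat ->
  cval (cellD N q) = digit (N / 2) (q - 1).
Proof.
  intros N q Hq. destruct q as [|q]; [lia|].
  unfold cval, cellD, sbit, digit. replace (S q - 1)%nat with q by lia. rewrite !div3pow_S.
  rewrite (Nat.Div0.div_div N 2), (Nat.mul_comm 2), <- Nat.Div0.div_div.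
  set (P := (N / 3 ^ q)%nat).
  assert (HP : (P = 6 * (P / 6) + P mod 6)%nat) by (apply Nat.div_mod; lia).
  pose proof (Nat.mod_upper_bound P 6 ltac:(lia)).
  set (a := (P/6)%nat) in *. set (r := (P mod 6)%nat) in *. rewrite HP.
  assert (E1 : ((6*a + r)/3 = 2*a + r/3)%nat).
  { replace (6*a+r)%nat with (r + (2*a)*3)%nat by lia. rewrite Nat.div_add; lia. }
  assert (E2 : ((6*a + r)/2 = 3*a + r/2)%nat).
  { replace (6*a+r)%nat with (r + (3*a)*2)%nat by lia. rewrite Nat.div_add; lia. }
  assert (E3 : ((6*a + r) mod 3 = r mod 3)%nat).
  { replace (6*a+r)%nat with (r + (2*a)*3)%nat by lia. rewrite Nat.Div0.mod_add; lia. }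
  assert (E4 : ((3*a + r/2) mod 3 = (r/2) mod 3)%nat).
  { replace (3*a+r/2)%nat with (r/2 + a*3)%nat by lia. rewrite Nat.Div0.mod_add; lia. }
  rewrite ?E1, ?E2, ?E3, ?E4.
  assert (Hodd : Nat.odd (2*a + r/3) = Nat.odd (r/3)).
  { rewrite Nat.odd_add, Nat.odd_mul. simpl. reflexivity. }
  rewrite Hodd.
  destruct r as [|[|[|[|[|[|r]]]]]]; try lia; reflexivity.
Qed.

Lemma digit_3v1 : forall v p, digit (3 * v + 1) (S p) = digit v p.
Proof.
  intros. unfold digit. rewrite div3pow_S'. f_equal. f_equal.
  replace (3*v+1)%nat with (1 + v*3)%nat by lia. rewrite Nat.div_add; try lia.
  reflexivity.
Qed.

Lemma digit_3v1_0 : forall v, digit (3 * v + 1) 0 = 1%nat.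
Proof.
  intros. unfold digit. simpl Nat.pow. rewrite Nat.div_1_r.
  replace (3*v+1)%nat with (1 + v*3)%nat by lia. rewrite Nat.Div0.mod_add. reflexivity.
Qed.

Lemma sbit_3v1_1 : forall v, sbit (3 * v + 1) 1 = Nat.odd v.
Proof.
  intros. unfold sbit. simpl Nat.pow.
  replace (3*v+1)%nat with (1 + v*3)%nat by lia. rewrite Nat.div_add; try lia.
  reflexivity.
Qed.

Lemma sbit_small : forall N q, (N < 3 ^ q)%nat -> sbit N q = false.
Proof. intros. unfold sbit. rewrite Nat.div_small; auto. Qed.

Lemma val3_digit : forall a i, (forall d, In d a -> (d < 3)%nat) ->
  digit (val3 a) i = nth i a 0%nat.
Proof.
  induction a as [|d a IH]; intros i Ha.
  - unfold digit. simpl. rewrite Nat.Div0.div_0_l. destruct i; reflexivity.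
  - destruct i as [|i].
    + unfold digit. simpl Nat.pow. rewrite Nat.div_1_r. change (val3 (d :: a)) with (d + 3 * val3 a)%nat.
      replace (d + 3 * val3 a)%nat with (d + val3 a * 3)%nat by lia.
      rewrite Nat.Div0.mod_add. apply Nat.mod_small. apply Ha. left; auto.
    + unfold digit. rewrite div3pow_S'. change (val3 (d :: a)) with (d + 3 * val3 a)%nat.
      replace (d + 3 * val3 a)%nat with (d + val3 a * 3)%nat by lia.
      rewrite Nat.div_add; try lia. rewrite (Nat.div_small d 3). simpl.
      apply IH. intros; apply Ha; right; auto. apply Ha; left; auto.
Qed.

Lemma val3_bound : forall a, (forall d, In d a -> (d < 3)%nat) -> (val3 a < 3 ^ length a)%nat.
Proof.
  induction a as [|d a IH]; intros Ha; simpl. lia.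
  assert (d < 3)%nat by (apply Ha; left; auto).
  assert (val3 a < 3 ^ length a)%nat by (apply IH; intros; apply Ha; right; auto).
  lia.
Qed.


Definition kk (a : list nat) : Z := Z.of_nat (length a).
Definition v (a : list nat) (m : nat) : nat := Nat.iter m T (val3 a).
Definition par (a : list nat) (m : nat) : Z := if Nat.odd (v a m) then 1 else 0.
Fixpoint B (a : list nat) (m : nat) : Z :=
  match m with O => 0 | S j => B a j - par a j end.
Definition w (a : list nat) (j : nat) : nat :=
  if Nat.odd (v a j) then (3 * v a j + 1)%nat else v a j.

Lemma v_S : forall a j, v a (S j) = (w a j / 2)%nat.
Proof.
  intros. unfold w. change (v a (S j)) with (T (v a j)). unfold T.
  rewrite <- Nat.negb_odd. destruct (Nat.odd (v a j)); reflexivity.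
Qed.

Lemma w_even : forall a j, Nat.odd (w a j) = false.
Proof.
  intros. unfold w. destruct (Nat.odd (v a j)) eqn:E; auto.
  rewrite Nat.odd_add, Nat.odd_mul, E. reflexivity.
Qed.

Lemma T_pos : forall x, (1 <= x)%nat -> (1 <= T x)%nat.
Proof.
  intros x Hx. unfold T. destruct (Nat.even x) eqn:E.
  - apply Nat.even_spec in E. destruct E as [q Hq]. subst.
    rewrite Nat.mul_comm, Nat.div_mul; lia.
  - assert (2 <= (3 * x + 1) / 2)%nat; [|lia].
    apply Nat.div_le_lower_bound; lia.
Qed.

Lemma v_pos : forall a m, (1 <= val3 a)%nat -> (1 <= v a m)%nat.
Proof.
  intros a m H. induction m; [exact H|]. change (v a (S m)) with (T (v a m)).
  apply T_pos; auto.
Qed.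

Lemma par_01 : forall a j, par a j = 0 \/ par a j = 1.
Proof. intros. unfold par. destruct (Nat.odd _); auto. Qed.

Lemma B_S_ge : forall a j, B a j - 1 <= B a (S j) <= B a j.
Proof. intros. simpl. destruct (par_01 a j); lia. Qed.

Lemma B_mono : forall a m1 m2, (m1 <= m2)%nat -> B a m2 <= B a m1.
Proof.
  intros a m1 m2 H. induction H; [lia|]. pose proof (B_S_ge a m). lia.
Qed.

Lemma B_eq_even : forall a m1 m2, (m1 < m2)%nat -> B a m1 = B a m2 ->
  Nat.odd (v a m1) = false.
Proof.
  intros a m1 m2 H E. pose proof (B_mono a (S m1) m2 H).
  simpl in H0. unfold par in H0. destruct (Nat.odd (v a m1)); auto. lia.
Qed.

Lemma B_S_le0 : forall a j, B a (S j) <= - par a 0.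
Proof.
  intros. pose proof (B_mono a 1 (S j) ltac:(lia)). cbn [B] in *. lia.
Qed.

Lemma pow3_pos : forall e, (1 <= 3 ^ e)%nat.
Proof. intros. pose proof (Nat.pow_nonzero 3 e). lia. Qed.

Lemma bound_all : forall a, (forall d, In d a -> (d < 3)%nat) -> (1 <= val3 a)%nat ->
  forall m, (v a m < 3 ^ Z.to_nat (kk a - B a m))%nat /\ B a m < kk a.
Proof.
  intros a Ha H1 m. induction m.
  - simpl. unfold kk. rewrite Z.sub_0_r, Nat2Z.id. pose proof (val3_bound a Ha).
    split; auto. unfold v in *. simpl in *. destruct (length a); simpl in *; lia.
  - destruct IHm as [IH1 IH2].
    assert (Hw : (w a m < 3 ^ Z.to_nat (kk a - B a (S m)))%nat).
    { simpl. unfold w, par. destruct (Nat.odd (v a m)).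
      - replace (Z.to_nat (kk a - (B a m - 1))) with (S (Z.to_nat (kk a - B a m))) by lia.
        rewrite Nat.pow_succ_r'. lia.
      - rewrite Z.sub_0_r. auto. }
    pose proof (v_pos a (S m) H1).
    assert (v a (S m) < 3 ^ Z.to_nat (kk a - B a (S m)))%nat.
    { rewrite v_S. pose proof (Nat.Div0.div_le_upper_bound (w a m) 2 (w a m)). lia. }
    split; auto.
    destruct (Z_lt_le_dec (B a (S m)) (kk a)); auto.
    replace (Z.to_nat (kk a - B a (S m))) with 0%nat in H0 by lia. rewrite Nat.pow_0_r in H0. lia.
Qed.

Lemma w_bound : forall a, (forall d, In d a -> (d < 3)%nat) -> (1 <= val3 a)%nat ->
  forall m, (w a m < 3 ^ Z.to_nat (kk a - B a (S m)))%nat.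
Proof.
  intros a Ha H1 m. destruct (bound_all a Ha H1 m) as [IH1 IH2].
  simpl. unfold w, par. destruct (Nat.odd (v a m)).
  - replace (Z.to_nat (kk a - (B a m - 1))) with (S (Z.to_nat (kk a - B a m))) by lia.
    rewrite Nat.pow_succ_r'. lia.
  - rewrite Z.sub_0_r. auto.
Qed.


Ltac bdestr := repeat match goal with
 | |- context [Z.ltb ?x ?y] => destruct (Z.ltb_spec x y)
 | |- context [Z.leb ?x ?y] => destruct (Z.leb_spec x y)
 | |- context [Z.eqb ?x ?y] => destruct (Z.eqb_spec x y)
 end; cbn [andb orb negb].

Definition good (a : list nat) : Prop :=
  (forall d, In d a -> (d < 3)%nat) /\ (1 <= val3 a)%nat.

Definition col (a : list nat) (n m : nat) (y : Z) : cell :=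
  let k := kk a in let nz := Z.of_nat n in
  match m with
  | O => if (1 <=? y) && (y <=? k) then enc_digit a (Z.to_nat (y - 1))
         else if (y =? 0) && Nat.odd (v a 0) && (k + 1 <=? nz) then Def false true else Undef
  | S j => let D := Z.of_nat m + k - y in let N := w a j in let q := y - B a m in
     if k <? y then Undef
     else if y =? k then (if D <=? nz then cellD N (Z.to_nat q) else Half false)
     else if 0 <? q then (if D <=? nz then cellD N (Z.to_nat q)
                          else if nz + 1 =? D then Half (sbit N (Z.to_nat q)) else Undef)
     else if q =? 0 then
       (if Nat.odd (v a m) then
          (if D + 1 <=? nz then Def false true else if D <=? nz + 1 then Half false else Undef)
        else if D <=? nz + 1 then Half false else Undef)
     else Undef
  end.

Definition Scfg (a : list nat) (n : nat) : config := fun x y =>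
  if 0 <? x then Undef else col a n (Z.to_nat (- x)) y.

Definition fireb (a : list nat) (n m : nat) (y : Z) : bool :=
  (y =? B a m) && Nat.odd (v a m) && (Z.of_nat n =? Z.of_nat m + kk a - y).

Definition SpC (a : list nat) (n m : nat) (y : Z) : cell :=
  if fireb a n m y then Def false true else col a n m y.

Definition Sp (a : list nat) (n : nat) : config := fun x y =>
  if 0 <? x then Undef else SpC a n (Z.to_nat (- x)) y.

Lemma Sp_col : forall a n m y, Sp a n (- Z.of_nat m) y = SpC a n m y.
Proof.
  intros. unfold Sp. bdestr; [lia|]. f_equal. lia.
Qed.

Lemma Scfg_col : forall a n m y, Scfg a n (- Z.of_nat m) y = col a n m y.
Proof.
  intros. unfold Scfg. bdestr; [lia|]. f_equal. lia.
Qed.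

Lemma enc_cval : forall a i, (forall d, In d a -> (d < 3)%nat) ->
  exists s c, enc_digit a i = Def s c /\ (b2n s + b2n c = nth i a 0)%nat.
Proof.
  intros a i Ha. unfold enc_digit.
  assert (Hlt : (nth i a 0 < 3)%nat).
  { destruct (Nat.lt_ge_cases i (length a)).
    - apply Ha. apply nth_In. auto.
    - rewrite nth_overflow; auto. }
  destruct (nth i a 0%nat) as [|[|[|d]]] eqn:E.
  - exists false, false. auto.
  - destruct (match prev_non1 a i with Some 2%nat => true | _ => false end).
    + exists true, false; auto.
    + exists false, true; auto.
  - exists true, true; auto.
  - lia.
Qed.

Lemma enc_notHalf : forall a i s, enc_digit a i <> Half s.
Proof.
  intros. unfold enc_digit. destruct (nth i a 0%nat) as [|[|d]]; try discriminate.
  destruct (match prev_non1 a i with Some 2%nat => true | _ => false end); discriminate.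
Qed.

Lemma B0 : forall a, B a 0 = 0.
Proof. reflexivity. Qed.

Lemma BS : forall a j, B a (S j) = B a j - (if Nat.odd (v a j) then 1 else 0).
Proof. reflexivity. Qed.

Lemma W1 : forall a j y, B a j < y ->
  digit (w a j) (Z.to_nat (y - B a (S j) - 1)) = digit (v a j) (Z.to_nat (y - B a j - 1)).
Proof.
  intros. rewrite BS. unfold w. destruct (Nat.odd (v a j)).
  - replace (Z.to_nat (y - (B a j - 1) - 1)) with (S (Z.to_nat (y - B a j - 1))) by lia.
    apply digit_3v1.
  - f_equal. f_equal. lia.
Qed.

Lemma Bk : forall a m, good a -> B a m < kk a.
Proof. intros a m [Ha H1]. apply (bound_all a Ha H1 m). Qed.

Lemma kpos : forall a, good a -> 1 <= kk a.
Proof. intros a G. pose proof (Bk a 0 G). simpl in H. lia. Qed.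

Lemma cellD_def : forall N q, (1 <= q)%nat ->
  exists s c, cellD N q = Def s c /\ (b2n s + b2n c = digit (N / 2) (q - 1))%nat.
Proof.
  intros. pose proof (cellD_cval N q H). unfold cellD in *.
  eexists; eexists; split; [reflexivity|]. exact H0.
Qed.

Lemma E12 : forall a n j y, good a -> B a (S j) < y <= kk a ->
  Z.of_nat j + kk a - y <= Z.of_nat n ->
  exists s c, SpC a n j y = Def s c /\
    (b2n s + b2n c = digit (w a j) (Z.to_nat (y - B a (S j) - 1)))%nat.
Proof.
  intros a n j y G Hy Hn. pose proof (Bk a j G) as HBj.
  destruct (Z.eq_dec y (B a j)) as [Ey|Ey].
  -
    assert (Hod : Nat.odd (v a j) = true).
    { rewrite BS in Hy. destruct (Nat.odd (v a j)); auto. lia. }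
    assert (Hd : digit (w a j) (Z.to_nat (y - B a (S j) - 1)) = 1%nat).
    { rewrite BS, Hod. replace (Z.to_nat (y - (B a j - 1) - 1)) with 0%nat by lia.
      unfold w; rewrite Hod. apply digit_3v1_0. }
    rewrite Hd. exists false, true. split; auto.
    unfold SpC, fireb. rewrite Hod. bdestr; try lia; auto.
    destruct j as [|i].
    + unfold col. rewrite B0 in Ey. subst y. bdestr; try lia. rewrite Hod. reflexivity.
    + unfold col. bdestr; try lia. rewrite Hod. bdestr; try lia; reflexivity.
  - assert (Hgt : B a j < y) by (pose proof (B_S_ge a j); lia).
    rewrite W1 by auto.
    unfold SpC, fireb. destruct (Z.eqb_spec y (B a j)); [lia|]. simpl.
    destruct j as [|i].
    + unfold col. rewrite B0 in *. bdestr; try lia;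
      destruct (enc_cval a (Z.to_nat (y - 1)) (proj1 G)) as [s [c [E1 E2]]];
      exists s, c; split; auto; rewrite E2; rewrite (val3_digit a _ (proj1 G));
      f_equal; lia.
    + unfold col. bdestr; try lia; try subst y;
      match goal with |- context [cellD ?N ?q] =>
        destruct (cellD_def N q ltac:(lia)) as [s [c [E1 E2]]] end;
      exists s, c; split; auto; rewrite E2, v_S; f_equal; lia.
Qed.


Lemma NDcol : forall a n j y, good a ->
  (y < B a j \/ (y = B a j /\ (Nat.odd (v a j) = false \/ Z.of_nat n < Z.of_nat j + kk a - y))) ->
  quiet (col a n j y).
Proof.
  intros a n j y G H. pose proof (Bk a j G). unfold quiet.
  destruct j as [|i].
  - rewrite B0 in *. unfold col. bdestr; try lia; auto;
    destruct (Nat.odd (v a 0)) eqn:E; cbn [andb]; auto;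
    exfalso; destruct H as [H|[H [H'|H']]]; try lia; discriminate.
  - unfold col. bdestr; try lia; auto;
    destruct (Nat.odd (v a (S i))) eqn:E; bdestr; try lia; auto;
    exfalso; destruct H as [H|[H [H'|H']]]; try lia; discriminate.
Qed.

Lemma ND : forall a n j y, good a ->
  (y < B a j \/ (y = B a j /\ (Nat.odd (v a j) = false \/ Z.of_nat n < Z.of_nat j + kk a - y))) ->
  quiet (SpC a n j y).
Proof.
  intros. unfold SpC, fireb.
  destruct (Z.eqb_spec y (B a j)); cbn [andb]; [|apply NDcol; auto].
  destruct (Nat.odd (v a j)) eqn:E; cbn [andb]; [|apply NDcol; auto].
  destruct (Z.eqb_spec (Z.of_nat n) (Z.of_nat j + kk a - y)); [|apply NDcol; auto].
  exfalso. destruct H0 as [H0|[H0 [H1|H1]]]; try lia. congruence.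
Qed.

Lemma E4 : forall a n j, good a -> (1 <= j)%nat -> Z.of_nat n < Z.of_nat j ->
  SpC a n j (kk a) = Half false.
Proof.
  intros a n j G Hj Hn. pose proof (Bk a j G).
  unfold SpC, fireb. destruct (Z.eqb_spec (kk a) (B a j)); [lia|]. cbn [andb].
  destruct j as [|i]; [lia|]. unfold col. bdestr; try lia; reflexivity.
Qed.

Lemma col_half_true : forall a n m y, good a -> col a n m y = Half true ->
  exists j, m = S j /\ y < kk a /\ 0 < y - B a m /\ Z.of_nat n + 1 = Z.of_nat m + kk a - y.
Proof.
  intros a n m y G Hh. destruct m as [|j].
  - unfold col in Hh. revert Hh. bdestr; intro Hh;
    try (exfalso; exact (enc_notHalf _ _ _ Hh));
    destruct (Nat.odd (v a 0)); cbn [andb] in Hh; try discriminate;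
    revert Hh; bdestr; discriminate.
  - exists j. split; auto. unfold col in Hh. revert Hh. bdestr; intro Hh;
    first [ discriminate | (unfold cellD in Hh; discriminate)
          | (destruct (Nat.odd (v a (S j))); revert Hh; bdestr; discriminate)
          | (split; [lia|]; split; [lia|]; congruence) | idtac ].
    all: injection Hh; intros; subst; lia.
Qed.

Lemma col0_Def : forall a n y, good a -> 1 <= y <= kk a -> exists s c, col a n 0 y = Def s c.
Proof.
  intros a n y G Hy. unfold col. bdestr; try lia;
  destruct (enc_cval a (Z.to_nat (y-1)) (proj1 G)) as [s [c [E _]]]; eauto.
Qed.

Lemma nl_iff : forall a n x y, good a ->
  (nonlocal_cond (Scfg a n) x y <-> (x <= 0 /\ fireb a n (Z.to_nat (- x)) y = true)).
Proof.
  intros a n x y G. split.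
  - intros [Hw1 [Hq2 Hq3]]. unfold Scfg in Hw1. revert Hw1. bdestr; intro Hw1; [discriminate|].
    destruct (col_half_true a n _ _ G Hw1) as [j [Ej [Hy [Hq Hn]]]].
    assert (Ex : x = - Z.of_nat j) by lia. subst x. split; [lia|].
    replace (Z.to_nat (- - Z.of_nat j)) with j by lia.
    rewrite Ej in *. clear Hw1 Ej.
    rewrite Scfg_col in Hq2.
    pose proof (B_S_ge a j).
    assert (Hyj : y <= B a j).
    { destruct (Z_le_gt_dec y (B a j)); auto. exfalso.
      destruct j as [|i].
      + rewrite B0 in *. destruct (col0_Def a n y G ltac:(lia)) as [s [c E]].
        rewrite E in Hq2. destruct Hq2; discriminate.
      + unfold col in Hq2. revert Hq2. bdestr; intros Hq2; try lia;
        destruct Hq2 as [Hq2|Hq2]; try discriminate; try (unfold cellD in Hq2; discriminate). }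
    assert (Ey : y = B a j) by lia.
    assert (Hod : Nat.odd (v a j) = true).
    { rewrite BS in Hq. destruct (Nat.odd (v a j)); auto. lia. }
    unfold fireb. rewrite Hod. bdestr; lia.
  - intros [Hx Hf]. set (m := Z.to_nat (-x)) in *.
    assert (Ex : x = - Z.of_nat m) by lia. clearbody m. subst x.
    unfold fireb in Hf. apply andb_prop in Hf. destruct Hf as [Hf Hf3].
    apply andb_prop in Hf. destruct Hf as [Hf1 Hod].
    apply Z.eqb_eq in Hf1. apply Z.eqb_eq in Hf3.
    pose proof (Bk a m G) as HBk.
    split; [|split].
    + replace (- Z.of_nat m - 1) with (- Z.of_nat (S m)) by lia. rewrite Scfg_col.
      unfold col. rewrite BS, Hod. bdestr; try lia.
      f_equal. replace (Z.to_nat (y - (B a m - 1))) with 1%nat by lia.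
      unfold w. rewrite Hod. rewrite sbit_3v1_1. auto.
    + rewrite Scfg_col. unfold quiet. destruct m as [|i].
      * unfold col. rewrite B0 in *. bdestr; try lia. rewrite Hod. cbn [andb].
        bdestr; try lia; auto.
      * unfold col. bdestr; try lia. rewrite Hod. bdestr; try lia; auto.
    + intros i Hi. unfold Scfg. bdestr; [unfold quiet; auto|].
      set (m' := Z.to_nat (- (- Z.of_nat m + i))).
      assert (Hm' : (m' < m)%nat) by lia.
      apply NDcol; auto.
      pose proof (B_mono a m' m ltac:(lia)).
      destruct (Z.eq_dec (B a m) (B a m')); [|left; lia].
      right. split; [lia|]. left. eapply B_eq_even; eauto.
Qed.

Lemma nonlocal_eq : forall a n, good a -> nonlocal (Scfg a n) = Sp a n.
Proof.
  intros a n G. extensionality x. extensionality y. unfold nonlocal.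
  destruct (excluded_middle_informative (nonlocal_cond (Scfg a n) x y)) as [H|H].
  - apply nl_iff in H; auto. destruct H as [Hx Hf]. unfold Sp, SpC. rewrite Hf.
    bdestr; [lia|]. reflexivity.
  - unfold Sp, SpC, Scfg. bdestr; auto.
    destruct (fireb a n (Z.to_nat (- x)) y) eqn:E; auto.
    exfalso. apply H. apply nl_iff; auto.
Qed.

Lemma base_eq : forall a, good a -> Scfg a 0 = c0 a.
Proof.
  intros a G. extensionality x. extensionality y. unfold c0, Scfg.
  pose proof (kpos a G). unfold kk in *.
  destruct (Z_lt_le_dec 0 x).
  - bdestr; try lia; auto.
  - destruct (Z.eq_dec x 0).
    + subst x. replace (Z.to_nat (-0)) with 0%nat by lia. unfold col, kk in *.
      bdestr; try lia; auto; destruct (Nat.odd (v a 0)); cbn [andb]; auto.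
    + set (m := Z.to_nat (-x)). assert (Ex : x = - Z.of_nat m) by lia.
      destruct m as [|j]; [lia|]. pose proof (Bk a (S j) G). unfold kk in *.
      unfold col, kk in *. bdestr; try lia; auto;
      destruct (Nat.odd (v a (S j))); bdestr; try lia; auto.
Qed.




Lemma fire_ne : forall a n m y, y <> B a m -> SpC a n m y = col a n m y.
Proof. intros. unfold SpC, fireb. destruct (Z.eqb_spec y (B a m)); [lia|]. reflexivity. Qed.

Lemma cS_above : forall a n j y, kk a < y -> col a n (S j) y = Undef.
Proof. intros. unfold col. bdestr; lia || auto. Qed.

Lemma cS_k : forall a n j, good a -> col a n (S j) (kk a) =
  if Z.of_nat (S j) <=? Z.of_nat n then cellD (w a j) (Z.to_nat (kk a - B a (S j))) else Half false.
Proof. intros. unfold col. bdestr; try lia; auto. Qed.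

Lemma cS_dig : forall a n j y, y < kk a -> B a (S j) < y -> col a n (S j) y =
  let D := Z.of_nat (S j) + kk a - y in
  if D <=? Z.of_nat n then cellD (w a j) (Z.to_nat (y - B a (S j)))
  else if Z.of_nat n + 1 =? D then Half (sbit (w a j) (Z.to_nat (y - B a (S j)))) else Undef.
Proof. intros. unfold col. bdestr; try lia; auto. Qed.

Lemma cS_bot : forall a n j, good a -> col a n (S j) (B a (S j)) =
  let D := Z.of_nat (S j) + kk a - B a (S j) in
  if Nat.odd (v a (S j)) then
    (if D + 1 <=? Z.of_nat n then Def false true else if D <=? Z.of_nat n + 1 then Half false else Undef)
  else if D <=? Z.of_nat n + 1 then Half false else Undef.
Proof. intros. pose proof (Bk a (S j) H). unfold col. bdestr; try lia; auto. Qed.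

Lemma cS_below : forall a n j y, good a -> y < B a (S j) -> col a n (S j) y = Undef.
Proof. intros. pose proof (Bk a (S j) H). unfold col. bdestr; try lia; auto. Qed.

Lemma digit_pos : forall N y b, b < y -> digit N (Z.to_nat (y - b) - 1) = digit N (Z.to_nat (y - b - 1)).
Proof. intros. f_equal. lia. Qed.

Lemma local_col : forall a n j y, good a ->
  local (Sp a n) (- Z.of_nat (S j)) y = col a (S n) (S j) y.
Proof.
  intros a n j y G. unfold local.
  replace (- Z.of_nat (S j) + 1) with (- Z.of_nat j) by lia. rewrite !Sp_col.
  pose proof (Bk a (S j) G) as HBk. pose proof (Bk a j G) as HBj.
  pose proof (B_S_ge a j) as HBS.
  pose proof (w_bound a (proj1 G) (proj2 G) j) as Hwb.
  set (N := w a j) in *.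
  destruct (Z_lt_le_dec (kk a) y) as [Hy|Hy].
  {
    rewrite fire_ne by lia. rewrite cS_above by lia.
    rewrite fire_ne by lia. rewrite cS_above by lia. rewrite cS_above by lia. reflexivity. }
  destruct (Z.eq_dec y (kk a)) as [Ek|Ek].
  {
    subst y. rewrite fire_ne by lia. rewrite !cS_k by auto.
    destruct (Z.leb_spec (Z.of_nat (S j)) (Z.of_nat n)).
    { destruct (Z.leb_spec (Z.of_nat (S j)) (Z.of_nat (S n))); [|lia].
      unfold cellD. reflexivity. }
    destruct (Z.leb_spec (Z.of_nat (S j)) (Z.of_nat (S n))).
    -
      destruct (E12 a n j (kk a) G ltac:(lia) ltac:(lia)) as [s [c [E1 E2]]].
      rewrite E1. unfold cellD. fold N in E2 |- *.
      rewrite (sbit_small N) by exact Hwb. cbn [b2n].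
      rewrite digit_pos by lia. rewrite <- E2. reflexivity.
    - rewrite E4 by (auto; lia). reflexivity. }
  destruct (Z_lt_le_dec (B a (S j)) y) as [Hq|Hq].
  {
    rewrite fire_ne by lia. rewrite (cS_dig a n j y) by lia. rewrite (cS_dig a (S n) j y) by lia.
    cbv zeta. fold N.
    set (D := Z.of_nat (S j) + kk a - y).
    destruct (Z.leb_spec D (Z.of_nat n)).
    { destruct (Z.leb_spec D (Z.of_nat (S n))); [|lia]. reflexivity. }
    destruct (Z.eqb_spec (Z.of_nat n + 1) D).
    - destruct (E12 a n j y G ltac:(lia) ltac:(lia)) as [s [c [E1 E2]]].
      rewrite E1. destruct (Z.leb_spec D (Z.of_nat (S n))); [|lia].
      unfold cellD. fold N in E2 |- *. rewrite digit_pos by lia. rewrite <- E2.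
      f_equal. f_equal. lia.
    - destruct (Z.leb_spec D (Z.of_nat (S n))); [lia|].
      destruct (Z.eqb_spec (Z.of_nat (S n) + 1) D).
      +
        destruct (Z.eq_dec (y + 1) (kk a)) as [Ek1|Ek1].
        * rewrite fire_ne by lia. rewrite Ek1, cS_k by auto.
          destruct (Z.leb_spec (Z.of_nat (S j)) (Z.of_nat n)); [lia|].
          destruct (E12 a n j (kk a) G ltac:(lia) ltac:(lia)) as [s [c [E1 E2]]].
          rewrite E1. fold N in E2. f_equal.
          rewrite (sbit_step N). replace (S (Z.to_nat (y - B a (S j)))) with (Z.to_nat (kk a - B a (S j))) by lia.
          rewrite (sbit_small N _ Hwb).
          replace (Z.to_nat (y - B a (S j))) with (Z.to_nat (kk a - B a (S j) - 1)) by lia.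
          rewrite <- E2. rewrite b2n_odd_xor. reflexivity.
        * rewrite fire_ne by lia. rewrite (cS_dig a n j (y+1)) by lia. cbv zeta. fold N.
          destruct (Z.leb_spec (Z.of_nat (S j) + kk a - (y + 1)) (Z.of_nat n)); [lia|].
          destruct (Z.eqb_spec (Z.of_nat n + 1) (Z.of_nat (S j) + kk a - (y + 1))); [|lia].
          destruct (E12 a n j (y+1) G ltac:(lia) ltac:(lia)) as [s [c [E1 E2]]].
          rewrite E1. fold N in E2. f_equal.
          rewrite (sbit_step N (Z.to_nat (y - B a (S j)))).
          replace (S (Z.to_nat (y - B a (S j)))) with (Z.to_nat (y + 1 - B a (S j))) by lia.
          replace (Z.to_nat (y + 1 - B a (S j) - 1)) with (Z.to_nat (y - B a (S j))) in E2 by lia.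
          rewrite <- E2, <- b2n_odd_xor. destruct s, c, (sbit _ _); reflexivity.
      +
        destruct (Z.eq_dec (y + 1) (kk a)) as [Ek1|Ek1].
        * rewrite fire_ne by lia. rewrite Ek1, cS_k by auto.
          destruct (Z.leb_spec (Z.of_nat (S j)) (Z.of_nat n)); [lia|].
          destruct j as [|i]; [lia|].
          rewrite E4 by (auto; lia). reflexivity.
        * rewrite fire_ne by lia. rewrite (cS_dig a n j (y+1)) by lia. cbv zeta.
          destruct (Z.leb_spec (Z.of_nat (S j) + kk a - (y + 1)) (Z.of_nat n)); [lia|].
          destruct (Z.eqb_spec (Z.of_nat n + 1) (Z.of_nat (S j) + kk a - (y + 1))); [lia|].
          reflexivity. }
  destruct (Z.eq_dec y (B a (S j))) as [Eb|Eb].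
  {
    set (D := Z.of_nat (S j) + kk a - y).
    assert (Hs0 : sbit N 0 = false).
    { unfold sbit. simpl Nat.pow. rewrite Nat.div_1_r. apply w_even. }
    assert (Hquiet : quiet (SpC a n j y)).
    { apply ND; auto. destruct (Z.eq_dec y (B a j)); [|left; lia].
      right. split; auto. left. apply (B_eq_even a j (S j)); lia. }
    assert (Heast : forall s, match SpC a n j y with
        | Def s' c' => Def s (2 <=? b2n s + b2n s' + b2n c')%nat | _ => Half s end = Half s).
    { intros s. destruct Hquiet as [Hq'|Hq']; rewrite Hq'; reflexivity. }
    assert (Hnorth : Z.of_nat n + 1 < D ->
      match SpC a n (S j) (y + 1) with
      | Half s => match SpC a n j (y + 1) with
                  | Def s' c' => Half (xorb (xorb s s') c') | _ => Undef end
      | _ => Undef end = if D <=? Z.of_nat n + 2 then Half false else Undef).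
    { intros Hn.
      destruct (Z.eq_dec (y + 1) (kk a)) as [Ek1|Ek1].
      - rewrite fire_ne by lia. rewrite Ek1, cS_k by auto.
        destruct (Z.leb_spec (Z.of_nat (S j)) (Z.of_nat n)); [lia|].
        destruct (Z.leb_spec (Z.of_nat j) (Z.of_nat n)).
        + destruct (E12 a n j (kk a) G ltac:(lia) ltac:(lia)) as [s [c [E1 E2]]].
          rewrite E1. fold N in E2.
          destruct (Z.leb_spec D (Z.of_nat n + 2)); [|lia]. f_equal.
          rewrite (sbit_step N 0) in Hs0.
          assert (H1' : Z.to_nat (kk a - B a (S j)) = 1%nat) by lia. rewrite H1' in Hwb.
          rewrite (sbit_small N 1 Hwb) in Hs0.
          replace (Z.to_nat (kk a - B a (S j) - 1)) with 0%nat in E2 by lia.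
          rewrite <- E2, <- b2n_odd_xor in Hs0. destruct s, c; cbn in Hs0 |- *; congruence.
        + destruct j as [|i]; [lia|]. rewrite E4 by (auto; lia).
          destruct (Z.leb_spec D (Z.of_nat n + 2)); [lia|]. reflexivity.
      - rewrite fire_ne by lia. rewrite (cS_dig a n j (y+1)) by lia. cbv zeta. fold N.
        destruct (Z.leb_spec (Z.of_nat (S j) + kk a - (y + 1)) (Z.of_nat n)); [lia|].
        destruct (Z.eqb_spec (Z.of_nat n + 1) (Z.of_nat (S j) + kk a - (y + 1))).
        + destruct (E12 a n j (y+1) G ltac:(lia) ltac:(lia)) as [s [c [E1 E2]]].
          rewrite E1. fold N in E2.
          destruct (Z.leb_spec D (Z.of_nat n + 2)); [|lia]. f_equal.
          rewrite (sbit_step N 0) in Hs0.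
          replace (Z.to_nat (y + 1 - B a (S j))) with 1%nat by lia.
          replace (Z.to_nat (y + 1 - B a (S j) - 1)) with 0%nat in E2 by lia.
          rewrite <- E2, <- b2n_odd_xor in Hs0.
          destruct s, c, (sbit N 1); cbn in Hs0 |- *; congruence.
        + destruct (Z.leb_spec D (Z.of_nat n + 2)); [lia|]. reflexivity. }
    unfold SpC at 1. unfold fireb. rewrite <- Eb. rewrite Z.eqb_refl. cbn [andb].
    rewrite Eb. rewrite !cS_bot by auto. rewrite <- Eb. fold D. cbv zeta.
    replace (Z.of_nat (S n)) with (Z.of_nat n + 1) by lia.
    destruct (Nat.odd (v a (S j))) eqn:Hod.
    - cbn [andb]. destruct (Z.eqb_spec (Z.of_nat n) D).
      + destruct (Z.leb_spec (D + 1) (Z.of_nat n + 1)); [cbv iota beta; reflexivity|lia].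
      + cbv iota beta. destruct (Z.leb_spec (D + 1) (Z.of_nat n)).
        { destruct (Z.leb_spec (D + 1) (Z.of_nat n + 1)); [reflexivity|lia]. }
        destruct (Z.leb_spec D (Z.of_nat n + 1)).
        { rewrite Heast. destruct (Z.leb_spec (D + 1) (Z.of_nat n + 1)); [lia|].
          destruct (Z.leb_spec D (Z.of_nat n + 1 + 1)); [reflexivity|lia]. }
        rewrite Hnorth by lia.
        destruct (Z.leb_spec (D + 1) (Z.of_nat n + 1)); [lia|].
        replace (Z.of_nat n + 1 + 1) with (Z.of_nat n + 2) by lia. reflexivity.
    - cbn [andb]. cbv iota beta. destruct (Z.leb_spec D (Z.of_nat n + 1)).
      { rewrite Heast. destruct (Z.leb_spec D (Z.of_nat n + 1 + 1)); [reflexivity|lia]. }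
      rewrite Hnorth by lia.
      replace (Z.of_nat n + 1 + 1) with (Z.of_nat n + 2) by lia. reflexivity. }
  {
    assert (Hlt : y < B a (S j)) by lia.
    rewrite fire_ne by lia. rewrite cS_below by auto. rewrite cS_below by auto.
    destruct (Z.eq_dec (y + 1) (B a (S j))) as [E1|E1].
    - assert (Hqt : quiet (SpC a n j (y + 1))).
      { apply ND; auto. destruct (Z.eq_dec (y+1) (B a j)); [|left; lia].
        right. split; auto. left. apply (B_eq_even a j (S j)); lia. }
      destruct Hqt as [Hqt|Hqt]; rewrite Hqt; destruct (SpC a n (S j) (y + 1)); reflexivity.
    - rewrite fire_ne by lia. rewrite cS_below by (auto; lia). reflexivity. }
Qed.


Lemma col0_step : forall a n y, good a -> SpC a n 0 y = col a (S n) 0 y.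
Proof.
  intros a n y G. unfold SpC, fireb, col. rewrite B0.
  destruct (Nat.odd (v a 0)) eqn:Hod; bdestr; try lia; auto.
Qed.

Lemma col0_notHalf : forall a n y s, col a n 0 y <> Half s.
Proof.
  intros. unfold col. bdestr; try apply enc_notHalf;
  destruct (Nat.odd (v a 0)); cbn [andb]; bdestr; discriminate.
Qed.

Lemma step_eq : forall a n, good a -> F (Scfg a n) = Scfg a (S n).
Proof.
  intros a n G. unfold F. rewrite nonlocal_eq by auto.
  extensionality x. extensionality y.
  destruct (Z_lt_le_dec 0 x).
  - unfold local, Sp, Scfg. bdestr; try lia; reflexivity.
  - destruct (Z.eq_dec x 0).
    + subst x. replace 0 with (- Z.of_nat 0) by reflexivity.
      rewrite Scfg_col. unfold local. rewrite !Sp_col.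
      replace (- Z.of_nat 0 + 1) with 1 by lia.
      assert (Hu : forall yy, Sp a n 1 yy = Undef) by (intros; unfold Sp; bdestr; lia || auto).
      rewrite !Hu. rewrite col0_step by auto.
      destruct (col a (S n) 0 y) eqn:E; try reflexivity.
      destruct (SpC a n 0 (y + 1)); reflexivity.
    + set (m := Z.to_nat (-x)). assert (Ex : x = - Z.of_nat m) by lia.
      clearbody m. subst x. destruct m as [|j]; [lia|].
      rewrite Scfg_col. apply local_col; auto.
Qed.

Lemma iter_eq : forall a n, good a -> Nat.iter n F (c0 a) = Scfg a n.
Proof.
  intros a n G. induction n.
  - simpl. symmetry. apply base_eq; auto.
  - simpl. rewrite IHn. apply step_eq; auto.
Qed.

Definition Nbig (a : list nat) (x y : Z) : nat := Z.to_nat (Z.abs x + Z.abs (kk a) + Z.abs y + 2).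

Lemma stable : forall a n x y, (Nbig a x y <= n)%nat -> Scfg a n x y = Scfg a (Nbig a x y) x y.
Proof.
  intros a n x y H. unfold Nbig in *. unfold Scfg. bdestr; auto.
  set (m := Z.to_nat (-x)). assert (Ex : x = - Z.of_nat m) by lia.
  clearbody m. subst x. destruct m as [|j].
  - unfold col. destruct (Nat.odd (v a 0)); bdestr; try lia; auto.
  - unfold col. destruct (Nat.odd (v a (S j))); bdestr; try lia; auto.
Qed.

Lemma cinf_eq : forall a x y, good a -> c_inf a x y = Scfg a (Nbig a x y) x y.
Proof.
  intros a x y G. unfold c_inf.
  destruct (excluded_middle_informative _) as [H|H].
  - destruct (constructive_indefinite_description _ H) as [vv [N HN]]. simpl.
    rewrite <- (HN (Nat.max N (Nbig a x y))) by lia.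
    rewrite iter_eq by auto. apply stable. lia.
  - exfalso. apply H. exists (Scfg a (Nbig a x y) x y). exists (Nbig a x y).
    intros n Hn. rewrite iter_eq by auto. apply stable; auto.
Qed.

Lemma cinf_col : forall a j y n, good a -> (Nbig a (- Z.of_nat (S j)) y <= n)%nat ->
  c_inf a (- Z.of_nat (S j)) y = col a n (S j) y.
Proof.
  intros. rewrite cinf_eq by auto. rewrite <- stable with (n := n) by auto.
  apply Scfg_col.
Qed.

Lemma colval_digits : forall C x cnt y0 q0 V,
  (forall i, (i < cnt)%nat -> cval (C x (y0 + 1 + Z.of_nat i)) = digit V (q0 + i)) ->
  colval C x y0 cnt = ((V / 3 ^ q0) mod 3 ^ cnt)%nat.
Proof.
  intros C x cnt. induction cnt as [|cnt IH]; intros y0 q0 V H.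
  - cbn [colval]. rewrite Nat.pow_0_r, Nat.mod_1_r. reflexivity.
  - simpl colval. rewrite (IH (y0 + 1) (S q0) V).
    + rewrite (Nat.pow_succ_r' 3 cnt), Nat.Div0.mod_mul_r.
      rewrite div3pow_S. specialize (H 0%nat ltac:(lia)).
      replace (y0 + 1 + Z.of_nat 0) with (y0 + 1) in H by lia.
      rewrite H. unfold digit. rewrite Nat.add_0_r. lia.
    + intros i Hi. specialize (H (S i) ltac:(lia)).
      replace (y0 + 1 + 1 + Z.of_nat i) with (y0 + 1 + Z.of_nat (S i)) by lia.
      rewrite H. f_equal. lia.
Qed.


Theorem mainTheorem3 (z : nat) (alpha : list nat) (x0 : Z) :
  (1 <= z)%nat ->
  std_base3 alpha z ->
  x0 < 0 ->
  exists yb : Z,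
    sum_defined (c_inf alpha x0 yb) /\
    (forall y : Z, y < yb -> ~ sum_defined (c_inf alpha x0 y)) /\
    sum_bit_is (c_inf alpha x0 yb) false /\
    yb <= Z.of_nat (length alpha) /\
    (forall y : Z, yb < y <= Z.of_nat (length alpha) -> is_defined (c_inf alpha x0 y)) /\
    colval (c_inf alpha) x0 yb (Z.to_nat (Z.of_nat (length alpha) - yb))
      = Nat.iter (Z.to_nat (- x0)) T z.
Proof.
  intros Hz [Ha [Hlast Hval]] Hx0.
  assert (G : good alpha) by (split; auto; lia).
  set (j := Z.to_nat (- x0 - 1)) in *.
  assert (Ex : x0 = - Z.of_nat (S j)) by lia. clearbody j. subst x0.
  replace (Z.to_nat (- - Z.of_nat (S j))) with (S j) by lia.
  change (Z.of_nat (length alpha)) with (kk alpha).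
  pose proof (Bk alpha (S j) G) as HBk.
  set (x := - Z.of_nat (S j)).
  assert (Hc : forall y, c_inf alpha x y = col alpha (Nbig alpha x y) (S j) y)
    by (intros; apply cinf_col; auto).
  assert (Hb : forall y, Z.of_nat (S j) + kk alpha - y + 1 <= Z.of_nat (Nbig alpha x y))
    by (intros; unfold Nbig, x; lia).
  assert (Hbot2 : sum_defined (c_inf alpha x (B alpha (S j))) /\
                  sum_bit_is (c_inf alpha x (B alpha (S j))) false).
  { rewrite Hc, cS_bot by auto. cbv zeta. specialize (Hb (B alpha (S j))).
    destruct (Nat.odd (v alpha (S j))); bdestr; try lia; simpl; auto. }
  assert (Hdig : forall y, B alpha (S j) < y <= kk alpha ->
            c_inf alpha x y = cellD (w alpha j) (Z.to_nat (y - B alpha (S j)))).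
  { intros y Hy. rewrite Hc. specialize (Hb y).
    destruct (Z.eq_dec y (kk alpha)).
    - subst y. rewrite cS_k by auto. bdestr; try lia; auto.
    - rewrite cS_dig by lia. cbv zeta. bdestr; try lia; auto. }
  exists (B alpha (S j)). split; [|split; [|split; [|split; [|split]]]].
  - apply Hbot2.
  - intros y Hy. rewrite Hc, cS_below by auto. simpl. auto.
  - apply Hbot2.
  - lia.
  - intros y Hy. rewrite Hdig by auto. unfold cellD. simpl. auto.
  - rewrite (colval_digits _ _ _ _ 0 (v alpha (S j))).
    + rewrite Nat.pow_0_r, Nat.div_1_r. rewrite Nat.mod_small.
      * unfold v. subst z. reflexivity.
      * destruct (bound_all alpha Ha ltac:(lia) (S j)). auto.
    + intros i Hi. rewrite Hdig by lia. rewrite cellD_cval by lia.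
      rewrite <- v_S. f_equal. lia.
Qed.
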